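(* In the setting below, assume that $g(x)$ and $l(x)$ are self-reciprocal. If $r_{11}(x)\neq 1$, then $C$ is not symplectic LCD.
   Context: Let $q$ be a prime power, $F=\mathbb{F}_q$, $m\ge1$ with $\gcd(q,m)=1$, and $R=F[x]/\langle x^m-1\rangle$; elements of $R$ are represented by polynomials of degree $<m$ and identified with their coefficient vectors in $F^m$. A quasi-cyclic code of length $2m$ and index $2$ is an $R$-submodule $C\subseteq R^2$. For $a,b\in R$ let $\langle a,b\rangle_e$ be the standard dot product of their coefficient vectors. The symplectic form on $R^2$ is $\langle (a_1,a_2),(b_1,b_2)\rangle_s=\langle a_1,b_2\rangle_e-\langle a_2,b_1\rangle_e$; $C$ is symplectic LCD if $C\cap C^{\perp_s}=\{0\}$. For a nonzero polynomial $f$ of degree $k$, $f^*(x)=x^kf(x^{-1})$; $f$ is self-reciprocal if $f^*=\alpha f$ for some $\alpha\in F$. Suppose $C$ is generated as an $R$-module by $(g_{11}(x),g_{12}(x))$ and $(0,g_{22}(x))$, where $g_{11},g_{12},g_{22}\in F[x]$ satisfy: $g_{11}\mid x^m-1$, $g_{22}\mid x^m-1$, $\deg g_{12}<\deg g_{22}$, and $g_{11}g_{22}\mid (x^m-1)g_{12}$. Define $g=\gcd(g_{11},g_{22})$, $l=(x^m-1)/\mathrm{lcm}(g_{11},g_{22})$, $g_{11}=g\,g_{11}'$, $r_{11}=\gcd(g_{11}',g_{11}'^* )$ (monic). *)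

(* Defs.v *)
From HB Require Import structures.
From mathcomp Require Import all_boot all_order all_algebra all_field.
Set Implicit Arguments. Unset Strict Implicit. Unset Printing Implicit Defensive.
Import GRing.Theory.
Local Open Scope ring_scope.

(* Elements of R = F[x]/<x^m - 1> are represented by polynomials of size <= m
   (degree < m); their coefficient vector is (p`_0, ..., p`_(m-1)). *)

Definition xm1 (F : fieldType) (m : nat) : {poly F} := 'X^m - 1.

Definition redm (F : fieldType) (m : nat) (p : {poly F}) : {poly F} := p %% xm1 F m.

Definition dote (F : fieldType) (m : nat) (a b : {poly F}) : F :=
  \sum_(i < m) a`_i * b`_i.

Definition symp (F : fieldType) (m : nat) (u v : {poly F} * {poly F}) : F :=
  dote m u.1 v.2 - dote m u.2 v.1.

Definition inQC (F : fieldType) (m : nat) (g11 g12 g22 : {poly F})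
  (c : {poly F} * {poly F}) : Prop :=
  exists a b : {poly F}, c = (redm m (a * g11), redm m (a * g12 + b * g22)).

Definition in_symp_dual (F : fieldType) (m : nat)
  (C : {poly F} * {poly F} -> Prop) (v : {poly F} * {poly F}) : Prop :=
  [/\ (size v.1 <= m)%N, (size v.2 <= m)%N &
      forall c, C c -> symp m c v = 0].

Definition symplectic_LCD (F : fieldType) (m : nat)
  (C : {poly F} * {poly F} -> Prop) : Prop :=
  forall v, C v -> in_symp_dual m C v -> v = (0, 0).

(* reciprocal polynomial f^*(x) = x^(deg f) f(x^-1) *)
Definition recip (F : fieldType) (f : {poly F}) : {poly F} :=
  \poly_(i < size f) f`_((size f).-1 - i).

Definition self_reciprocal (F : fieldType) (f : {poly F}) : Prop :=
  f != 0 /\ exists alpha : F, recip f = alpha *: f.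

Definition monicize (F : fieldType) (p : {poly F}) : {poly F} :=
  (lead_coef p)^-1 *: p.

Definition lcmpoly (F : fieldType) (p q : {poly F}) : {poly F} :=
  (p * q) %/ gcdp p q.

(* Main.v *)
Require Import Defs.
From HB Require Import structures.
From mathcomp Require Import all_boot all_order all_algebra all_field all_fingroup all_solvable.
From mathcomp Require Import zify ring.
Import GRing.Theory FinRing.Theory.
Local Open Scope ring_scope.

Section Rv.
Variable F : fieldType.
Implicit Types p q r : {poly F}.

Definition rv n p : {poly F} := \poly_(i < n) p`_(n.-1 - i).

Lemma rv_coef n p i : (rv n p)`_i = if (i < n)%N then p`_(n.-1 - i) else 0.
Proof. by rewrite coef_poly. Qed.

Lemma rvD n p q : rv n (p + q) = rv n p + rv n q.
Proof. by apply/polyP=> i; rewrite coefD !rv_coef coefD; case: ifP; rewrite ?addr0. Qed.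

Lemma rvZ n c p : rv n (c *: p) = c *: rv n p.
Proof. by apply/polyP=> i; rewrite coefZ !rv_coef coefZ; case: ifP; rewrite ?mulr0. Qed.

Lemma rvX n r : (size r <= n)%N -> rv n.+1 ('X * r) = rv n r.
Proof.
move=> sr; apply/polyP=> i; rewrite !rv_coef coefXM /=.
case: ifP => h1; case: ifP => h2 //.
- by case: ifP => h3 //; lia.
- case: ifP => h3; first by congr (r`_ _); lia.
  by rewrite nth_default //; lia.
- lia.
Qed.

Lemma rvXn n k p : (size p <= n)%N -> rv (n + k) p = 'X^k * rv n p.
Proof.
move=> sp; apply/polyP=> i; rewrite coefXnM !rv_coef.
case: (ltnP i k) => ik.
  rewrite ifT; last lia.
  by apply: nth_default; apply: leq_trans sp _; lia.
case: ifP => h1; case: ifP => h2 //; try lia.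
  congr (p`_ _); lia.
Qed.

Lemma rvC n c : rv n.+1 c%:P = c *: 'X^n.
Proof.
apply/polyP=> i; rewrite rv_coef coefZ coefXn coefC /=.
case: ifP => h1.
  by case: eqP => h2; case: eqP => h3; rewrite ?mulr0 ?mulr1 //; lia.
by case: eqP => h3; rewrite ?mulr0 //; lia.
Qed.

Lemma poly_split0 q : q = (q`_0)%:P + 'X * drop_poly 1 q.
Proof.
apply/polyP=> i; rewrite coefD coefC coefXM coef_drop_poly.
by case: i => [|i] /=; rewrite ?addr0 ?add0r ?addn1.
Qed.

Lemma rvM n k p q : (size p <= n)%N -> (size q <= k.+1)%N ->
  rv (n + k) (p * q) = rv n p * rv k.+1 q.
Proof.
move=> sp; elim: k q => [|k IH] q sq.
  rewrite (size1_polyC sq) addn0 mulrC mul_polyC rvZ rvC expr0.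
  by rewrite -mul_polyC mulrC alg_polyC.
have sq' : (size (drop_poly 1 q) <= k.+1)%N by rewrite size_drop_poly; lia.
have spq : (size (p * drop_poly 1 q)%R <= n + k)%N.
  apply: (leq_trans (size_mul_leq _ _)); lia.
have E1 : p * q = (q`_0) *: p + 'X * (p * drop_poly 1 q).
  by rewrite {1}(poly_split0 q) -mul_polyC; ring.
have E2 : rv k.+2 q = q`_0 *: 'X^(k.+1) + rv k.+1 (drop_poly 1 q).
  by rewrite {1}(poly_split0 q) rvD rvC rvX.
rewrite E1 E2 addnS rvD rvX // IH // rvZ -addnS rvXn //.
rewrite -!mul_polyC; ring.
Qed.

Lemma rv_invol n p : (size p <= n)%N -> rv n (rv n p) = p.
Proof.
move=> sp; apply/polyP=> i; rewrite !rv_coef.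
case: ifP => h; last by rewrite nth_default //; move/negbT: h; rewrite -leqNgt; apply: leq_trans.
rewrite ifT; last lia. congr (p`_ _); lia.
Qed.


Lemma recipE p : recip p = rv (size p) p. Proof. by []. Qed.

Lemma recipM p k : p != 0 -> k != 0 -> recip (p * k) = recip p * recip k.
Proof.
move=> p0 k0; rewrite !recipE size_mul //.
have sk : (0 < size k)%N by rewrite size_poly_gt0.
have -> : ((size p + size k).-1 = size p + (size k).-1)%N by lia.
rewrite rvM //; by rewrite prednK.
Qed.

Lemma size_recip p : p`_0 != 0 -> size (recip p) = size p.
Proof.
move=> p0; rewrite /recip size_poly_eq //.
by rewrite subnn.
Qed.

Lemma recipK p : p`_0 != 0 -> recip (recip p) = p.
Proof.
move=> p0; rewrite {1}recipE size_recip // recipE rv_invol //.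
Qed.

Lemma recip_dvd p q : p != 0 -> q != 0 -> p %| q -> recip p %| recip q.
Proof.
move=> p0 q0 /dvdpP [k Ek].
have k0 : k != 0 by apply: contraNneq q0 => k0; rewrite Ek k0 mul0r.
by rewrite Ek recipM // dvdp_mulIr.
Qed.

Lemma dote_coef n (u w : {poly F}) : (size u <= n.+1)%N -> (size w <= n.+1)%N ->
  dote n.+1 u w = (u * rv n.+1 w)`_n.
Proof.
move=> su sw; rewrite /dote coefM; apply: eq_bigr => j _.
rewrite rv_coef /= ifT; last lia.
congr (_ * w`_ _); case: j => j /= jn; lia.
Qed.


End Rv.
Arguments rv {F}.

Lemma dvdX_coef (F : fieldType) n (P : {poly F}) :
  ('X^(n.+1) - 1) %| P -> (size P <= (n.+1 + n.+1).-1)%N -> P`_n = 0.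
Proof.
move=> /dvdpP [k ->] sP.
have [->|k0] := eqVneq k 0; first by rewrite mul0r coef0.
have X0 : ('X^(n.+1) - 1 : {poly F}) != 0.
  by rewrite -size_poly_eq0 size_Xn_sub_1.
move: sP; rewrite size_mul // size_Xn_sub_1 // => sk.
rewrite mulrBr mulr1 coefB coefMXn ltnSn sub0r.
rewrite nth_default ?oppr0 //. move: sk; rewrite !addnS /= addSn; set s := size k; lia.
Qed.

Lemma card_natr0 (F : finFieldType) : (#|F|%:R : F) = 0.
Proof. by rewrite -zmodXgE -cardsT expg_cardG // inE. Qed.

Lemma natm_neq0 (F : finFieldType) m : coprime #|F| m -> (m%:R : F) != 0.
Proof.
move=> cop; have [p pr pc] := finPcharP F.
apply/negP=> /eqP m0.
have h1 : (p %| m)%N by rewrite (dvdn_pcharf pc) m0.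
have h2 : (p %| #|F|)%N by rewrite (dvdn_pcharf pc) card_natr0.
have : (p %| gcdn #|F| m)%N by rewrite dvdn_gcd h1 h2.
by rewrite (eqP cop) dvdn1 => /eqP p1; rewrite p1 in pr.
Qed.

Lemma sep_xm1 (F : finFieldType) m : (0 < m)%N -> coprime #|F| m ->
  separable_poly (xm1 F m).
Proof.
move=> m0 cop; rewrite unlock /xm1 derivB derivXn -scaler_nat.
rewrite (_ : (1 : {poly F})^`() = 0) ?subr0; last by rewrite -polyC1 derivC.
rewrite coprimepZr ?natm_neq0 //.
apply: coprimep_expr.
rewrite -['X]subr0 -polyC0 coprimep_XsubC rootE !hornerE oppr0 expr0n (gtn_eqF m0) /=.
by rewrite sub0r oppr_eq0 oner_neq0.
Qed.

Lemma recip_xm1 (F : fieldType) m : (0 < m)%N -> recip (xm1 F m) = - xm1 F m.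
Proof.
move=> m0; rewrite recipE /xm1 size_Xn_sub_1 //; apply/polyP=> i.
rewrite rv_coef !(coefN, coefB, coefXn, coef1) /=.
case: ifP => h.
  have [->|i0] := eqVneq i 0%N.
    by rewrite subn0 eqxx (gtn_eqF m0) [(0%N == m)]eq_sym (gtn_eqF m0) /= subr0 sub0r opprK.
  have [->|im] := eqVneq i m.
    by rewrite subnn eqxx eq_sym (gtn_eqF m0) /= sub0r subr0.
  rewrite ?(negbTE i0) ?(negbTE im).
  have -> : (m - i == m)%N = false by apply/eqP; lia.
  have -> : (m - i == 0)%N = false by apply/eqP; lia.
  by rewrite subrr oppr0.
have -> : (i == m) = false by apply/eqP; lia.
have -> : (i == 0)%N = false by apply/eqP; lia.
by rewrite subrr oppr0.
Qed.

Lemma natf1 a b m : ((a + b).-1 = m.+1 -> 1 < b -> a <= m)%N.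
Proof. lia. Qed.
Lemma natf2 a b n : (a <= n.+1 -> b <= n.+1 -> (a + b).-1 <= (n.+1 + n.+1).-1)%N.
Proof. lia. Qed.

Theorem lemma5p4 (F : finFieldType) (m : nat) (g11 g12 g22 : {poly F}) :
  (0 < m)%N -> coprime #|F| m ->
  g11 %| xm1 F m -> g22 %| xm1 F m ->
  (size g12 < size g22)%N ->
  (g11 * g22) %| (xm1 F m * g12) ->
  let g := gcdp g11 g22 in
  let l := xm1 F m %/ lcmpoly g11 g22 in
  let g11' := g11 %/ g in
  let r11 := monicize (gcdp g11' (recip g11')) in
  self_reciprocal g -> self_reciprocal l ->
  r11 != 1 ->
  ~ symplectic_LCD m (inQC m g11 g12 g22).
Proof.
move=> m0 cop dX11 dX22 s12 _ g l g11' r11 _ _ r11n1 LCD.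
set X := xm1 F m in dX11 dX22.
have sX : size X = m.+1 by rewrite /X /xm1 size_Xn_sub_1.
have X0 : X != 0 by rewrite -size_poly_eq0 sX.
have X00 : X`_0 != 0.
  by rewrite /X /xm1 coefB coefXn coef1 [(0%N == m)]eq_sym (gtn_eqF m0) /= sub0r oppr_eq0 oner_neq0.
have g11n0 : g11 != 0 by apply: contraTneq dX11 => ->; rewrite dvd0p.
have g22n0 : g22 != 0 by apply: contraTneq dX22 => ->; rewrite dvd0p.
have gn0 : g != 0 by rewrite /g gcdp_eq0 negb_and g11n0.
have Eg : g11' * g = g11 by rewrite /g11' divpK // dvdp_gcdl.
have g11'n0 : g11' != 0 by apply: contraNneq g11n0 => e; rewrite -Eg e mul0r.
have d11' : g11' %| g11 by rewrite -Eg dvdp_mulr.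
have d11'X : g11' %| X by apply: dvdp_trans dX11.
have c0 : g11'`_0 != 0.
  move: d11'X => /dvdpP [k Ek]; apply: contraNneq X00 => e.
  by rewrite Ek coef0M e mulr0.
have sep := @sep_xm1 F m m0 cop.
have cop1 : coprimep g11' g22.
  set p := gcdp g11' g22.
  have pg : p %| g by rewrite dvdp_gcd (dvdp_trans (dvdp_gcdl _ _) d11') dvdp_gcdr.
  have pp : p * p %| X.
    apply: dvdp_trans dX11; rewrite -Eg dvdp_mul //; exact: dvdp_gcdl.
  have := separable_coprime sep pp.
  by rewrite !coprimep_def gcdpp.
pose d := gcdp g11' (recip g11').
have dn0 : d != 0 by rewrite /d gcdp_eq0 negb_and g11'n0.
have sd : (1 < size d)%N.
  rewrite ltnNge; apply/negP => sd1; move/eqP: r11n1; apply.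
  rewrite /r11 -/d /monicize (size1_polyC sd1) lead_coefC -mul_polyC -polyCM mulVf //.
  by apply: contraNneq dn0 => e; rewrite (size1_polyC sd1) e.
have dd11' : d %| g11' by exact: dvdp_gcdl.
have copd : coprimep d g22 by rewrite coprimep_sym; apply: coprimep_dvdl dd11' _; rewrite coprimep_sym.
have dX : d %| X by apply: dvdp_trans d11'X.
set h := X %/ d.
have Ed : h * d = X by rewrite /h divpK.
have hd : g22 %| h.
  rewrite -(dvdp_mul2r _ _ dn0) Ed Gauss_dvdp ?dX22 ?dX //.
  by rewrite coprimep_sym.
have hn0 : h != 0 by apply: contraNneq X0 => e; rewrite -Ed e mul0r.
have sh : (size h <= m)%N.
  move: sX; rewrite -Ed size_mul // => sX; exact: natf1 sX sd.
have rg : recip g11' != 0.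
  by rewrite -size_poly_eq0 size_recip // size_poly_eq0.
have rd11 : recip d %| g11.
  apply: dvdp_trans d11'; rewrite -(@recipK F _ c0).
  by apply: recip_dvd => //; exact: dvdp_gcdr.
move: rd11 => /dvdpP [e Ee].
set Y := rv m h.
have EY : Y = 'X^(m - size h) * recip h.
  by rewrite /Y -{1}(subnKC sh) rvXn.
have RX : recip h * recip d = - X by rewrite -recipM // Ed (@recip_xm1 F m m0).
have key : X %| g11 * Y.
  apply/dvdpP; exists (- (e * 'X^(m - size h))).
  rewrite EY Ee; move: (recip h) (recip d) ('X^(m - size h)) (X) RX => A B C Z RX.
  transitivity (e * C * (A * B)); first by ring.
  by rewrite RX; ring.
have inC : inQC m g11 g12 g22 (0, h).
  exists 0, (h %/ g22); rewrite !mul0r add0r divpK // /redm mod0p modp_small //.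
  by rewrite -/X sX ltnS.
have : (0, h) = (0, 0) :> {poly F} * {poly F}.
  apply: LCD => //; split => //=; first by rewrite size_poly0.
  move=> c [a [b ->]]; rewrite /symp /=.
  have -> : dote m (redm m (a * g12 + b * g22)) 0 = 0.
    by rewrite /dote big1 // => i _; rewrite coef0 mulr0.
  rewrite subr0.
  set u := redm m (a * g11).
  have su : (size u <= m)%N.
    by rewrite -ltnS -sX ltn_modp.
  have kk : X %| u * Y.
    apply/modp_eq0P; rewrite /u /redm -/X mulrC modp_mul mulrC -mulrA.
    by apply/modp_eq0P; apply: dvdp_mull.
  have sY : (size Y <= m)%N by rewrite /Y /rv size_poly.
  move: m0 sX kk su sh sY; rewrite /Y /X /xm1; case: (m) => // n _ sX kk su sh sY.
  rewrite dote_coef //; apply: dvdX_coef => //.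
  apply: (leq_trans (size_mul_leq _ _)); exact: natf2 su sY.
by case=> /eqP; rewrite (negbTE hn0).
Qed.
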